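(* Let $T_0$ be a Steiner tree of the regular $d$-simplex, and let $\{T_k\}_{k\ge 0}$ be the sequence of Steiner trees of regular simplices obtained by repeatedly applying the doubling procedure to $T_0$ (so $T_k$ is a Steiner tree of the regular $2^kd$-simplex). Let $\ell_k$ denote the Steiner ratio of $T_k$, i.e. the cost of $T_k$ divided by the cost $(2^kd-1)\sqrt2$ of a minimum spanning tree of its terminals. If $\lim_{k\to\infty}\ell_k$ exists, then \[\lim_{k\to\infty}\ell_k=\frac{\sqrt3}{\sqrt2\,(2\sqrt2-1)}.\]
   Context: The regular $n$-simplex refers to the terminal set of standard basis vectors $\mathbf{e_1},\dots,\mathbf{e_n}\in\mathbb{R}^n$ (pairwise distance $\sqrt2$). A Steiner tree of a finite terminal set $P$ is a tree with vertex set $P\cup S$, $S$ a finite set of Steiner points, with Euclidean edge lengths; its cost is its total length. For $\mathbf{x}\in\mathbb{R}^m$, the split of $\mathbf{x}$ is $\left(\frac{x_1}{2},\frac{x_1}{2},\dots,\frac{x_m}{2},\frac{x_m}{2}\right)\in\mathbb{R}^{2m}$. The Fermat point of a triangle with all angles less than $120^\circ$ is the interior point at which each pair of vertices subtends $120^\circ$. Doubling procedure: given a Steiner tree $T$ of the regular $m$-simplex with Steiner point set $S$ in which each terminal is a leaf adjacent to a Steiner point, form $T'$ on terminals $\mathbf{e_1},\dots,\mathbf{e_{2m}}\in\mathbb{R}^{2m}$ by (1) taking the split $\mathbf{s'}$ of each $\mathbf{s}\in S$ as a Steiner point; (2) joining $\mathbf{r'},\mathbf{s'}$ whenever $\mathbf{r},\mathbf{s}\in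 S$ are adjacent in $T$; (3) for each terminal $\mathbf{e_i}$ of $T$ with adjacent Steiner point $\mathbf{s_i}$, adding the Fermat point $\mathbf{x_i}$ of the triangle $\mathbf{e_{2i-1}}\mathbf{e_{2i}}\mathbf{s'_i}$ as a Steiner point; (4) adding edges $(\mathbf{e_{2i-1}},\mathbf{x_i}),(\mathbf{e_{2i}},\mathbf{x_i}),(\mathbf{x_i},\mathbf{s'_i})$. It is implicitly assumed that $T_0$ is such that the procedure can be applied repeatedly (all required Fermat points exist). *)

(* Defs.v *)
From HB Require Import structures.
From mathcomp Require Import all_boot all_order all_algebra.
From mathcomp Require Import all_classical all_reals all_analysis.
Set Implicit Arguments. Unset Strict Implicit. Unset Printing Implicit Defensive.
Import Order.TTheory GRing.Theory Num.Theory.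
Local Open Scope ring_scope.

Section Steiner.
Variable R : realType.

Definition dotv n (u v : 'rV[R]_n) : R := \sum_(i < n) u 0 i * v 0 i.
Definition elen n (u : 'rV[R]_n) : R := Num.sqrt (dotv u u).

(* standard basis vector e_i of R^n (0-indexed: i : 'I_n) *)
Definition ebas n (i : 'I_n) : 'rV[R]_n := \row_(j < n) (i == j)%:R.

(* A tree on a finite vertex type: symmetric irreflexive edge relation,
   connected, with |V|-1 (unordered) edges (= 2(|V|-1) ordered pairs). *)
Definition is_tree (V : finType) (E : rel V) : Prop :=
  symmetric E /\ irreflexive E /\ (forall u v, connect E u v) /\
  #|[set p : V * V | E p.1 p.2]| = (2 * (#|V| - 1))%N.

(* A (candidate) Steiner tree of the regular nT-simplex: terminals are
   indexed by 'I_nT (terminal i sits at e_i), Steiner points by the finite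
   type St, with positions spos; E is the edge relation on P u S. *)
Record stree := STree {
  nT : nat;
  St : finType;
  spos : St -> 'rV[R]_nT;
  E : rel ('I_nT + St)%type }.
Arguments E : clear implicits.
Arguments spos : clear implicits.

Definition vpos (T : stree) (v : ('I_(nT T) + St T)%type) : 'rV[R]_(nT T) :=
  match v with inl i => ebas i | inr s => spos T s end.

Definition is_steiner_tree (T : stree) : Prop := is_tree (E T).

(* total length (each unordered edge counted once) *)
Definition cost (T : stree) : R :=
  (\sum_(u : ('I_(nT T) + St T)%type) \sum_(v | E T u v)
      elen (vpos u - vpos v)) / 2.

(* The Fermat point x of triangle abc: x distinct from the vertices and each
   pair of vertices subtends 120 degrees at x (cos = -1/2). *)
Definition is_fermat n (a b c x : 'rV[R]_n) : Prop :=
  [/\ x != a, x != b & x != c] /\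
  [/\ dotv (a - x) (b - x) = - 2^-1 * (elen (a - x) * elen (b - x)),
       dotv (b - x) (c - x) = - 2^-1 * (elen (b - x) * elen (c - x)) &
       dotv (a - x) (c - x) = - 2^-1 * (elen (a - x) * elen (c - x))].

(* index helpers: j : 'I_(2n) |-> j/2 ; i |-> 2i, 2i+1 (0-indexed versions of
   e_{2i-1}, e_{2i} for terminal e_i). *)
Lemma half_ord_proof n (j : 'I_(n.*2)) : (j./2 < n)%N.
Proof. by rewrite ltn_half_double. Qed.
Definition half_ord n (j : 'I_(n.*2)) : 'I_n := Ordinal (half_ord_proof j).
Lemma dbl_ord_proof n (i : 'I_n) : (i.*2 < n.*2)%N.
Proof. by rewrite ltn_double. Qed.
Definition dbl_ord n (i : 'I_n) : 'I_(n.*2) := Ordinal (dbl_ord_proof i).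
Lemma dblS_ord_proof n (i : 'I_n) : (i.*2.+1 < n.*2)%N.
Proof. by rewrite ltn_Sdouble. Qed.
Definition dblS_ord n (i : 'I_n) : 'I_(n.*2) := Ordinal (dblS_ord_proof i).

Definition splitv n (x : 'rV[R]_n) : 'rV[R]_(n.*2) :=
  \row_(j < n.*2) (x 0 (half_ord j) / 2).

Definition leaf_att (T : stree) (att : 'I_(nT T) -> St T) : Prop :=
  forall i v, E T (inl i) v = (v == inr (att i)).

(* Doubling: new Steiner points are the splits of the old ones (inl) and
   the Fermat points x i (inr). *)
Definition dbl_edge (T : stree) (att : 'I_(nT T) -> St T)
  (u v : ('I_((nT T).*2) + (St T + 'I_(nT T))%type)%type) : bool :=
  match u, v with
  | inr (inl r), inr (inl s) => E T (inr r) (inr s)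
  | inl j, inr (inr i) => half_ord j == i
  | inr (inr i), inl j => half_ord j == i
  | inr (inr i), inr (inl s) => s == att i
  | inr (inl s), inr (inr i) => s == att i
  | _, _ => false
  end.

Definition dbl_spos (T : stree) (x : 'I_(nT T) -> 'rV[R]_((nT T).*2))
  (s : (St T + 'I_(nT T))%type) : 'rV[R]_((nT T).*2) :=
  match s with inl s0 => splitv (spos T s0) | inr i => x i end.

Definition doubling (T : stree) (att : 'I_(nT T) -> St T)
  (x : 'I_(nT T) -> 'rV[R]_((nT T).*2)) : stree :=
  @STree ((nT T).*2) (St T + 'I_(nT T))%type (dbl_spos x) (dbl_edge att).

Definition is_doubling (T T' : stree) : Prop :=
  exists (att : 'I_(nT T) -> St T) (x : 'I_(nT T) -> 'rV[R]_((nT T).*2)),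
    [/\ leaf_att att,
        (forall i, is_fermat (ebas (dbl_ord i)) (ebas (dblS_ord i))
                             (splitv (spos T (att i))) (x i)) &
        T' = doubling att x].

End Steiner.

Definition ratio_seq (R : realType) (d : nat) (T : nat -> stree R) : R^nat :=
  fun k => cost (T k) / (((2 ^ k * d)%N%:R - 1) * Num.sqrt 2).

(* Main.v *)
Require Import Defs.
From HB Require Import structures.
From mathcomp Require Import all_boot all_order all_algebra.
From mathcomp Require Import all_classical all_reals all_analysis.
From mathcomp Require Import ring lra.
Import Order.TTheory GRing.Theory Num.Theory.
Import numFieldNormedType.Exports.
Local Open Scope ring_scope.
Set Implicit Arguments. Unset Strict Implicit.
Section Geo.
Variable R : realType.
Implicit Types n : nat.

Lemma dotv_sub n (u v : 'rV[R]_n) :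
  dotv (u - v) (u - v) = dotv u u + dotv v v - 2 * dotv u v.
Proof.
rewrite /dotv (eq_bigr (fun i => u 0 i * u 0 i + v 0 i * v 0 i - 2 * (u 0 i * v 0 i))).
  by rewrite sumrB big_split /= -mulr_sumr.
by move=> i _; rewrite !mxE; ring.
Qed.

Lemma dotv_ge0 n (u : 'rV[R]_n) : 0 <= dotv u u.
Proof. by apply: sumr_ge0 => i _; rewrite -expr2 sqr_ge0. Qed.

Lemma elen_sq n (u : 'rV[R]_n) : elen u ^+ 2 = dotv u u.
Proof. by rewrite sqr_sqrtr // dotv_ge0. Qed.

Lemma elen_ge0 n (u : 'rV[R]_n) : 0 <= elen u.
Proof. exact: sqrtr_ge0. Qed.

Lemma elenN n (a b : 'rV[R]_n) : elen (a - b) = elen (b - a).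
Proof.
rewrite -opprB /elen /dotv; congr Num.sqrt; apply: eq_bigr => i _.
by rewrite !mxE mulrNN.
Qed.

Lemma dotv_ebas_l n (j : 'I_n) (w : 'rV[R]_n) : dotv (ebas R j) w = w 0 j.
Proof.
rewrite /dotv (bigD1 j) //= big1 => [|k /negbTE]; rewrite !mxE ?eqxx.
  by rewrite mul1r addr0.
by rewrite eq_sym => ->; rewrite mul0r.
Qed.

Lemma dotv_e_sub n (j : 'I_n) (w : 'rV[R]_n) :
  dotv (ebas R j - w) (ebas R j - w) = 1 - 2 * w 0 j + dotv w w.
Proof.
rewrite dotv_sub !dotv_ebas_l !mxE eqxx /=; ring.
Qed.

Lemma half_dbl n (i : 'I_n) : half_ord (dbl_ord i) = i.
Proof. by apply: val_inj => /=; rewrite doubleK. Qed.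
Lemma half_dblS n (i : 'I_n) : half_ord (dblS_ord i) = i.
Proof. by apply: val_inj => /=; rewrite uphalf_double. Qed.

Lemma sum_dbl_nat (G : nat -> R) n :
  \sum_(0 <= j < n.*2) G j = \sum_(0 <= i < n) (G i.*2 + G i.*2.+1).
Proof.
elim: n => [|n IH]; first by rewrite !big_geq.
by rewrite doubleS !big_nat_recr //= IH addrA.
Qed.

Lemma sum_dbl n (F : 'I_(n.*2) -> R) :
  \sum_(j < n.*2) F j = \sum_(i < n) (F (dbl_ord i) + F (dblS_ord i)).
Proof.
pose G (k : nat) := if insub k is Some j then F j else 0.
have HG : forall j : 'I_(n.*2), F j = G (val j) by move=> j; rewrite /G valK.
rewrite (eq_bigr (fun j : 'I_(n.*2) => G (val j))); last by move=> j _; rewrite HG.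
rewrite -(big_mkord xpredT G) sum_dbl_nat big_mkord.
by apply: eq_bigr => i _; rewrite !HG.
Qed.

Lemma splitvB n (u v : 'rV[R]_n) : splitv u - splitv v = splitv (u - v).
Proof. by apply/rowP => j; rewrite !mxE mulrBl. Qed.

Lemma splitv_dbl n (w : 'rV[R]_n) i : splitv w 0 (dbl_ord i) = w 0 i / 2.
Proof. by rewrite mxE half_dbl. Qed.
Lemma splitv_dblS n (w : 'rV[R]_n) i : splitv w 0 (dblS_ord i) = w 0 i / 2.
Proof. by rewrite mxE half_dblS. Qed.

Lemma dotv_split n (w : 'rV[R]_n) : dotv (splitv w) (splitv w) = dotv w w / 2.
Proof.
rewrite /dotv sum_dbl mulr_suml; apply: eq_bigr => i _.
by rewrite splitv_dbl splitv_dblS; field.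
Qed.

Lemma elen_split n (u v : 'rV[R]_n) :
  elen (splitv u - splitv v) = elen (u - v) / Num.sqrt 2.
Proof.
rewrite splitvB /elen dotv_split sqrtrM ?invr_ge0 // ?dotv_ge0 //.
by rewrite sqrtrV.
Qed.

Lemma sq_inj (a b : R) : 0 <= a -> 0 <= b -> a ^+ 2 = b ^+ 2 -> a = b.
Proof.
move=> ha hb h.
have : (a - b) * (a + b) = 0 by rewrite -subr_sqr h subrr.
case/eqP; rewrite mulf_eq0 => /orP [/eqP|/eqP] H; first by apply/eqP; rewrite -subr_eq0 H.
nra.
Qed.

Lemma fermat_num (p q r t s2 s3 L : R) :
  0 <= p -> 0 <= q -> 0 <= r -> 0 <= t -> 0 < s2 -> s2 ^+ 2 = 2 ->
  0 < s3 -> s3 ^+ 2 = 3 ->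
  2 = p ^+ 2 + q ^+ 2 + p * q -> L = q ^+ 2 + r ^+ 2 + q * r ->
  L = p ^+ 2 + r ^+ 2 + p * r -> L = (t ^+ 2 + 1) / 2 ->
  s2 * (p + q + r) = t + s3.
Proof.
move=> hp hq hr ht hs2 e2 hs3 e3 h1 h2 h3 hL.
have hpq : q = p.
  have : (q - p) * (q + p + r) = 0 by rewrite h3 in h2; nra.
  move/eqP; rewrite mulf_eq0 => /orP [/eqP|/eqP] H.
    by apply/eqP; rewrite -subr_eq0 H.
  nra.
subst q.
have hp2 : p = s2 * s3 / 3.
  apply: sq_inj => //; first by apply: divr_ge0; [nra|lra].
  rewrite expr_div_n exprMn e2 e3; nra.
have hr2 : 2 * r + p = s2 * t.
  apply: sq_inj; [nra|nra|].
  rewrite exprMn e2; nra.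
have -> : r = (s2 * t - p) / 2 by rewrite -hr2; field.
rewrite hp2.
have -> : s2 * (s2 * s3 / 3 + s2 * s3 / 3 + (s2 * t - s2 * s3 / 3) / 2)
  = s2 ^+ 2 * (s3 / 2 + t / 2) by field.
by rewrite e2; field.
Qed.

Lemma fermat_gen n (u v w : 'rV[R]_n) :
  dotv (u - w) (v - w) = - 2^-1 * (elen (u - w) * elen (v - w)) ->
  dotv (u - v) (u - v) = elen (u - w) ^+ 2 + elen (v - w) ^+ 2 + elen (u - w) * elen (v - w).
Proof.
move=> h; have -> : u - v = (u - w) - (v - w) by rewrite opprB addrA subrK.
by rewrite dotv_sub h -!elen_sq; field.
Qed.

Lemma fermat_sum n (s : 'rV[R]_n) (i : 'I_n) (x : 'rV[R]_(n.*2)) :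
  is_fermat (ebas R (dbl_ord i)) (ebas R (dblS_ord i)) (splitv s) x ->
  Num.sqrt 2 * (elen (ebas R (dbl_ord i) - x) + elen (ebas R (dblS_ord i) - x)
                + elen (splitv s - x)) = elen (ebas R i - s) + Num.sqrt 3.
Proof.
move=> [_ [hab hbc hac]].
have hne : (dbl_ord i == dblS_ord i) = false.
  apply/negbTE/negP => /eqP /(congr1 val) /= /eqP.
  by rewrite -[X in X == _]addn0 -addn1 eqn_add2l.
have hc : forall j : 'I_(n.*2), (j = dbl_ord i \/ j = dblS_ord i) ->
    dotv (ebas R j - splitv s) (ebas R j - splitv s) = (elen (ebas R i - s) ^+ 2 + 1) / 2.
  move=> j [] ->; rewrite elen_sq !dotv_e_sub ?splitv_dbl ?splitv_dblS dotv_split;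
  by field.
apply: (@fermat_num _ _ _ _ _ _ ((elen (ebas R i - s) ^+ 2 + 1) / 2));
  [exact: elen_ge0|exact: elen_ge0|exact: elen_ge0|exact: elen_ge0
  |by rewrite sqrtr_gt0|by rewrite sqr_sqrtr|by rewrite sqrtr_gt0
  |by rewrite sqr_sqrtr| | | |by []].
- move: (fermat_gen hab); rewrite dotv_sub !dotv_ebas_l !mxE !eqxx eq_sym hne /=.
  by move=> <-; ring.
- by rewrite -(fermat_gen hbc) hc //; right.
- by rewrite -(fermat_gen hac) hc //; left.
Qed.

End Geo.

Section Cost.
Variable R : realType.

Definition Ssum (T : stree R) : R :=
  \sum_(u : ('I_(nT T) + St T)%type) \sum_(v | @E _ T u v) elen (vpos u - vpos v).

Definition Ast (T : stree R) : R :=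
  \sum_(s : St T) \sum_(r | @E _ T (inr s) (inr r)) elen (@spos _ T s - @spos _ T r).

Lemma Ssum_decomp (T : stree R) (att : 'I_(nT T) -> St T) :
  symmetric (@E _ T) -> leaf_att att ->
  Ssum T = 2 * \sum_i elen (ebas R i - @spos _ T (att i)) + Ast T.
Proof.
move=> hsym hl; rewrite /Ssum big_sumType /=.
under eq_bigr => i _ do rewrite (eq_bigl _ _ (hl i)) big_pred1_eq /=.
under [X in _ + X = _]eq_bigr => s _ do rewrite big_sumType /=.
rewrite big_split /= addrA; congr (_ + _).
under [X in _ + X]eq_bigr => s _ do rewrite big_mkcond /=.
rewrite [X in _ + X](exchange_big) /=.
have H : forall i, \sum_(s | @E _ T (inr s) (inl i)) elen (@spos _ T s - ebas R i)
   = elen (ebas R i - @spos _ T (att i)).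
  move=> i; rewrite (eq_bigl (fun s => s == att i)) ?big_pred1_eq 1?elenN //.
  by move=> s; rewrite hsym hl.
under [X in _ + X]eq_bigr => i _ do rewrite -big_mkcond H.
by ring.
Qed.

Lemma Ssum_dbl (T : stree R) (att : 'I_(nT T) -> St T) x :
  Ssum (doubling att x) =
  2 * \sum_i (elen (ebas R (dbl_ord i) - x i) + elen (ebas R (dblS_ord i) - x i)
              + elen (splitv (@spos _ T (att i)) - x i)) + Ast T / Num.sqrt 2.
Proof.
rewrite /Ssum big_sumType /= big_sumType /=.
under eq_bigr => j _ do rewrite big_sumType /= big_sumType /= !big_pred0_eq ?add0r ?addr0.
under [X in _ + (X + _)]eq_bigr => j _ do rewrite big_sumType /= big_sumType /= !big_pred0_eq ?add0r ?addr0.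
under [X in _ + (_ + X)]eq_bigr => j _ do rewrite big_sumType /= big_sumType /= !big_pred0_eq ?add0r ?addr0.
have H1 : forall j : 'I_((nT T).*2), \sum_(i < nT T | half_ord j == i) elen (ebas R j - x i)
   = elen (ebas R j - x (half_ord j)).
  by move=> j; rewrite (eq_bigl (fun i => i == half_ord j)) ?big_pred1_eq // => i; rewrite eq_sym.
under eq_bigr => j _ do rewrite H1.
rewrite sum_dbl.
under [X in X + _ = _]eq_bigr => i _ do rewrite half_dbl half_dblS.
rewrite [X in _ + (X + _) = _]big_split /=.
rewrite [X in _ + (_ + X) = _]big_split /=.
have HA : \sum_s \sum_(r | @E _ T (inr s) (inr r))
    elen (splitv (@spos _ T s) - splitv (@spos _ T r)) = Ast T / Num.sqrt 2.
  rewrite /Ast mulr_suml; apply: eq_bigr => s _; rewrite mulr_suml.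
  by apply: eq_bigr => r _; exact: elen_split.
have HB : \sum_s \sum_(i < nT T | s == att i) elen (splitv (@spos _ T s) - x i)
    = \sum_i elen (splitv (@spos _ T (att i)) - x i).
  rewrite (exchange_big_dep xpredT) //=.
  by apply: eq_bigr => i _; rewrite big_pred1_eq.
have HC : \sum_(i < nT T) \sum_(j < (nT T).*2 | half_ord j == i) elen (x i - ebas R j)
    = \sum_i (elen (ebas R (dbl_ord i) - x i) + elen (ebas R (dblS_ord i) - x i)).
  apply: eq_bigr => i _; rewrite big_mkcond sum_dbl (bigD1 i) //= big1 => [|k hk].
    by rewrite !half_dbl !half_dblS eqxx addr0 elenN [elen (x i - _)]elenN.
  by rewrite !half_dbl !half_dblS (negbTE hk) addr0.
have HD : \sum_(i < nT T) \sum_(s | s == att i) elen (x i - splitv (@spos _ T s))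
    = \sum_i elen (splitv (@spos _ T (att i)) - x i).
  by apply: eq_bigr => i _; rewrite big_pred1_eq elenN.
rewrite HA HB HC HD [X in _ = 2 * X + _]big_split /=.
ring.
Qed.

Lemma dbl_sym (T : stree R) (att : 'I_(nT T) -> St T) :
  symmetric (@E _ T) -> symmetric (dbl_edge att).
Proof.
move=> hs [j|[s|i]] [j'|[s'|i']] //=; by rewrite hs.
Qed.

Lemma cost_step (T T' : stree R) : symmetric (@E _ T) -> is_doubling T T' ->
  exists h : nT T' = (nT T).*2, symmetric (@E _ T') /\
  cost T' = cost T / Num.sqrt 2 + (nT T)%:R * (Num.sqrt 3 / Num.sqrt 2).
Proof.
move=> hs [att [x [hl hf ->]]]; exists erefl; split; first exact: dbl_sym.
have -> : cost (doubling att x) = Ssum (doubling att x) / 2 by [].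
have -> : cost T = Ssum T / 2 by [].
rewrite Ssum_dbl (Ssum_decomp hs hl).
have s2 : Num.sqrt 2 != 0 :> R by rewrite sqrtr_eq0 -ltNge.
have -> : \sum_i (elen (ebas R (dbl_ord i) - x i) + elen (ebas R (dblS_ord i) - x i)
              + elen (splitv (@spos _ T (att i)) - x i))
   = \sum_i (elen (ebas R i - @spos _ T (att i)) + Num.sqrt 3) / Num.sqrt 2.
  apply: eq_bigr => i _; rewrite -(fermat_sum (hf i)); by field.
rewrite -mulr_suml big_split /= sumr_const card_ord.
rewrite -mulr_natl; by field.
Qed.
End Cost.

Unset Implicit Arguments. Set Strict Implicit.
Local Open Scope classical_set_scope.
Local Open Scope ring_scope.
Lemma main_aux (R : realType) (d : nat) (T : nat -> stree R) :
  (1 <= d)%N ->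
  nT (T 0%N) = d ->
  is_steiner_tree (T 0%N) ->
  (forall k, is_doubling (T k) (T k.+1)) ->
  cvgn (ratio_seq d T) ->
  limn (ratio_seq d T) = Num.sqrt 3 / (Num.sqrt 2 * (2 * Num.sqrt 2 - 1)).
Proof.
move=> hd h0 [hs0 _] hdbl hcvg.
have Hind : forall k, symmetric (@E _ (T k)) /\ nT (T k) = (2 ^ k * d)%N.
  elim => [|k [hs hn]]; first by rewrite expn0 mul1n.
  have [hn' [hs' _]] := cost_step hs (hdbl k); split => //.
  by rewrite hn' hn -mul2n expnS mulnA.
set s2 := Num.sqrt (2 : R); set s3 := Num.sqrt (3 : R).
have Hrec : forall k, cost (T k.+1) = cost (T k) / s2 + (2 ^ k * d)%:R * (s3 / s2).
  move=> k; have [hs hn] := Hind k; have [_ [_ ->]] := cost_step hs (hdbl k).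
  by rewrite hn.
have s2gt0 : 0 < s2 by rewrite sqrtr_gt0.
have e2 : s2 ^+ 2 = 2 by rewrite sqr_sqrtr.
have s2n0 : s2 != 0 by rewrite gt_eqF.
set L := limn (ratio_seq d T).
have Hl : ratio_seq d T @ \oo --> L := hcvg.
pose v m := ((2 ^ m.+1)%:R : R)^-1.
have Hv : v @ \oo --> 0.
  have -> : v = (fun m => 2^-1 * (GRing.exp (2^-1 : R) m)).
    apply: funext => m; rewrite /v natrX exprS invfM exprVn //.
  rewrite -(mulr0 (2^-1)); apply: cvgMl_tmp; apply: cvg_expr.
  by rewrite ger0_norm ?invr_ge0 // invf_lt1 // ltr1n.
pose u m := cost (T m.+1) / (2 ^ m.+1)%:R.
have Nge : forall m, (2 : R) <= (2 ^ m.+1)%:R.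
  by move=> m; rewrite ler_nat -[2%N]expn1 leq_exp2l.
have dge : (1 : R) <= d%:R by rewrite ler1n.
have Hu_eq : u = (fun m => ratio_seq d T m.+1 * ((d%:R - v m) * s2)).
  apply: funext => m; rewrite /u /ratio_seq /v natrM.
  have hN := Nge m.
  have hN0 : ((2 ^ m.+1)%:R : R) != 0 by rewrite gt_eqF // (lt_le_trans _ hN).
  have hNd : ((2 ^ m.+1)%:R : R) * d%:R - 1 != 0 by rewrite gt_eqF // subr_gt0; nra.
  by rewrite -/s2; field; rewrite hN0 s2n0 hNd.
have Hu : u @ \oo --> L * ((d%:R - 0) * s2).
  rewrite Hu_eq; apply: cvgM; first by rewrite cvg_shiftS.
  apply: cvgMr_tmp; apply: cvgB => //; exact: cvg_cst.
have Hrec_u : forall m, u m.+1 = u m / (2 * s2) + d%:R * (s3 / s2) / 2.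
  move=> m; rewrite /u Hrec natrM !natrX !exprS.
  have hN0 : (2 : R) ^+ m != 0 by rewrite expf_neq0.
  by field; rewrite s2n0 hN0.
have H1 : (fun m => u m.+1) @ \oo --> L * ((d%:R - 0) * s2) by rewrite cvg_shiftS.
have H2 : (fun m => u m.+1) @ \oo --> L * ((d%:R - 0) * s2) / (2 * s2) + d%:R * (s3 / s2) / 2.
  rewrite (funext Hrec_u); apply: cvgD; last exact: cvg_cst.
  exact: cvgMr_tmp.
have Heq := @cvg_unique _ (@norm_hausdorff _ _) _ _ _ _ H1 H2.
have {}Heq : L * ((d%:R - 0) * s2) =
    L * ((d%:R - 0) * s2) / (2 * s2) + d%:R * (s3 / s2) / 2.
  by apply: Heq.
rewrite subr0 in Heq.
have key : L * (d%:R * (s2 * (2 * s2 - 1))) - s3 * d%:R =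
  (L * (d%:R * s2) - (L * (d%:R * s2) / (2 * s2) + d%:R * (s3 / s2) / 2)) * (2 * s2).
  by field.
rewrite -Heq subrr mul0r in key.
move/eqP: key; rewrite subr_eq0 => /eqP key.
have hD : (d%:R : R) != 0 by rewrite pnatr_eq0 -lt0n.
have h21 : 2 * s2 - 1 != 0 by rewrite gt_eqF //; nra.
have hX : d%:R * (s2 * (2 * s2 - 1)) != 0 by rewrite !mulf_neq0.
apply: (mulIf hX); rewrite key.
by field; rewrite s2n0 h21.
Qed.
Local Close Scope classical_set_scope.

Theorem mainTheorem13 (R : realType) (d : nat) (T : nat -> stree R) :
  (1 <= d)%N ->
  nT (T 0%N) = d ->
  is_steiner_tree (T 0%N) ->
  (forall k, is_doubling (T k) (T k.+1)) ->
  cvgn (ratio_seq d T) ->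
  limn (ratio_seq d T) = Num.sqrt 3 / (Num.sqrt 2 * (2 * Num.sqrt 2 - 1)).
Proof.
exact: main_aux. Qed.
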